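(* Let $q$ be a prime power and let $1 \le h \le T$ be integers. Let $\mathbf{G}$ be a random $h\times h$ matrix over $\mathbb{F}_q$ with an arbitrary distribution, and let $p(r) = \Pr[h - \operatorname{rank}\mathbf{G} = r]$, $r = 0,\dots,h$, be its rank deficiency distribution. Let $U \in \mathcal{P}(\mathbb{F}_q^T,h)$, and let $\mathbf{X}$ be an $h\times T$ matrix over $\mathbb{F}_q$ chosen uniformly at random from the set of all ordered bases of $U$ (i.e., all $h\times T$ matrices whose rows span $U$; there are $\prod_{i=1}^h (q^h - q^{i-1})$ of them), independently of $\mathbf{G}$. Let $\mathbf{Y} = \mathbf{G}\mathbf{X}$. Then for every subspace $V$ of $\mathbb{F}_q^T$ with $\dim V \le h$, $$\Pr\big[\langle \mathbf{Y}\rangle = V\big] = \begin{cases} \dfrac{p(h-\dim V)}{\binom{h}{\dim V}_q}, & \text{if } V \subseteq U,\\[2mm] 0, & \text{otherwise.}\end{cases}$$ In particular, this transition probability depends only on $p$, $h$, $\dim V$, and whether $V\subseteq U$, and not otherwise on the distribution of $\mathbf{G}$.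
   Context: $\mathbb{F}_q$ is the finite field with $q$ elements. For a matrix $M$ over $\mathbb{F}_q$, $\langle M\rangle$ denotes the subspace spanned by its rows. $\mathcal{P}(\mathbb{F}_q^T,k)$ denotes the Grassmannian, the set of all $k$-dimensional subspaces of $\mathbb{F}_q^T$. The $q$-ary Gaussian coefficient is $\binom{n}{\ell}_q = \prod_{i=0}^{\ell-1}\frac{q^{n-i}-1}{q^{\ell-i}-1}$, the number of $\ell$-dimensional subspaces of an $n$-dimensional vector space over $\mathbb{F}_q$ (with $\binom{n}{0}_q = 1$). *)

(* Defs.v *)
From HB Require Import structures.
From mathcomp Require Import all_boot all_order all_algebra.
Set Implicit Arguments. Unset Strict Implicit. Unset Printing Implicit Defensive.
Import Order.TTheory GRing.Theory Num.Theory.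
Local Open Scope ring_scope.

Definition gauss_binom (R : fieldType) (q n l : nat) : R :=
  \prod_(i < l) ((((q ^ (n - i))%N)%:R - 1) / (((q ^ (l - i))%N)%:R - 1)).

Definition bases_of (F : finFieldType) (h T : nat) (U : 'M[F]_T) :
  {set 'M[F]_(h, T)} := [set X : 'M[F]_(h, T) | (X == U)%MS].

Definition rank_def_dist (R : realFieldType) (F : finFieldType) (h : nat)
  (mu : 'M[F]_h -> R) (r : nat) : R :=
  \sum_(G : 'M[F]_h | (h - \rank G)%N == r) mu G.

Definition prob_span_eq (R : realFieldType) (F : finFieldType) (h T : nat)
  (mu : 'M[F]_h -> R) (U V : 'M[F]_T) : R :=
  \sum_(G : 'M[F]_h) \sum_(X in bases_of h U)
     mu G * (#|bases_of h U|%:R)^-1 * ((G *m X == V)%MS)%:R.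

(* Main.v *)
Require Import Defs.
From HB Require Import structures.
From mathcomp Require Import all_boot all_order all_algebra.
Set Implicit Arguments. Unset Strict Implicit. Unset Printing Implicit Defensive.
Import Order.TTheory GRing.Theory Num.Theory.

Section Count.
Variables (F : finFieldType) (T : nat).
Local Notation q := #|F|.

Lemma sum_bool_card (I : finType) (P : pred I) :
  \sum_(i : I) (P i : nat) = #|P|.
Proof.
rewrite -sum1_card [RHS]big_mkcond /=; apply: eq_bigr => i _.
by rewrite unfold_in; case: (P i).
Qed.

Lemma count_sub r (M : 'M[F]_(r, T)) :
  \sum_(v : 'rV[F]_T) ((v <= M)%MS : nat) = (q ^ \rank M)%N.
Proof.
rewrite sum_bool_card.
have -> : #|[pred v : 'rV[F]_T | (v <= M)%MS]| =
          #|[set (w *m row_base M)%R | w in [set: 'rV[F]_(\rank M)]]|.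
  apply: eq_card => v; rewrite !inE; apply/idP/imsetP.
    rewrite -(eq_row_base M) => /submxP[w ->]; by exists w; rewrite ?inE.
  by case=> w _ ->; apply: submx_trans (submxMl _ _) _; rewrite eq_row_base.
rewrite card_imset; last exact: row_free_inj (row_base_free M).
by rewrite cardsT card_mx mul1n.
Qed.

Lemma count_diff r (M : 'M[F]_(r, T)) (W : 'M[F]_T) : (M <= W)%MS ->
  \sum_(v : 'rV[F]_T) (((v <= W)%MS && ~~ (v <= M)%MS) : nat)
   = (q ^ \rank W - q ^ \rank M)%N.
Proof.
move=> sMW; rewrite -!count_sub.
have -> : \sum_(v : 'rV[F]_T) ((v <= W)%MS : nat) =
  \sum_(v : 'rV[F]_T) (((v <= W)%MS && ~~ (v <= M)%MS) : nat) +
  \sum_(v : 'rV[F]_T) ((v <= M)%MS : nat).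
  rewrite -big_split /=; apply: eq_bigr => v _.
  case vM: (v <= M)%MS; last by rewrite andbT addn0.
  by rewrite (submx_trans vM sMW).
by rewrite addnK.
Qed.


Lemma sum_col_mx a b (f : 'M[F]_(a + b, T) -> nat) :
  \sum_(X : 'M[F]_(a + b, T)) f X =
  \sum_(A : 'M[F]_(a, T)) \sum_(B : 'M[F]_(b, T)) f (col_mx A B).
Proof.
rewrite pair_big /=.
rewrite (reindex (fun p : 'M[F]_(a, T) * 'M[F]_(b, T) => col_mx p.1 p.2)) //=.
exists (fun X => (usubmx X, dsubmx X)) => [[A B] _ | X _] /=.
  by rewrite col_mxKu col_mxKd.
by rewrite vsubmxK.
Qed.

Lemma rank_addv r (M : 'M[F]_(r, T)) (v : 'rV[F]_T) :
  \rank (M + v)%MS = (\rank M + ~~ (v <= M)%MS)%N.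
Proof.
have le1 : (\rank (M + v)%MS <= \rank M + 1)%N.
  apply: leq_trans (mxrank_adds_leqif M v) _.
  by rewrite leq_add2l rank_leq_row.
have [sup eqc] := mxrank_leqif_sup (addsmxSl M v).
case vM: (v <= M)%MS => /=.
  by apply/eqP; rewrite addn0 eq_sym eqc addsmx_sub submx_refl vM.
apply/eqP; rewrite eqn_leq le1 /= addn1 ltn_neqAle sup andbT eqc addsmx_sub submx_refl vM //.
Qed.

Lemma count_ext (W : 'M[F]_T) m : forall r (M : 'M[F]_(r, T)), (M <= W)%MS ->
 \sum_(N : 'M[F]_(m, T)) (((N <= W)%MS && (\rank (M + N)%MS == \rank M + m)%N) : nat)
 = \prod_(i < m) (q ^ \rank W - q ^ (\rank M + i))%N.
Proof.
elim: m => [|m IH] r M sMW.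
  rewrite big_ord0 (eq_bigr (fun _ => 1%N)) ?sum1_card ?card_mx //.
  move=> N _; rewrite [N]flatmx0 sub0mx /= addn0.
  by rewrite addsmx0 eqxx.
rewrite (sum_col_mx (a := 1)) big_ord_recl /= addn0.
rewrite -(count_diff sMW) big_distrl /=; apply: eq_bigr => v _.
have E B : \rank (M + col_mx v B)%MS = \rank (M + v + B)%MS.
  rewrite -addsmxA; apply: eqmx_rank; apply/eqmxP; apply: adds_eqmx.
    exact: eqmx_refl.
  exact: eqmx_sym (addsmxE v B).
under eq_bigr do rewrite E.
under eq_bigr => B _ do rewrite (col_mx_sub v B W).
case vW: (v <= W)%MS; last by rewrite big1.
case vM: (v <= M)%MS => /=.
  rewrite mul0n big1 // => B _.
  suff H : (\rank (M + v + B)%MS != \rank M + m.+1)%N by rewrite (negbTE H) andbF.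
  rewrite neq_ltn; apply/orP; left.
  apply: leq_ltn_trans (mxrank_adds_leqif _ _) _.
  by rewrite rank_addv vM addn0 addnS ltnS leq_add2l rank_leq_row.
have sMvW : (M + v <= W)%MS by rewrite addsmx_sub sMW vW.
rewrite mul1n (eq_bigr (fun i : 'I_m => q ^ \rank W - q ^ (\rank (M + v)%MS + i)))%N; last first.
  by move=> i _; rewrite rank_addv vM /= /bump /= add1n addn1 addSnnS.
rewrite -(IH _ _ sMvW); apply: eq_bigr => B _.
by rewrite rank_addv vM /= addn1 addSnnS.
Qed.

Lemma eqmx_rankE a b (X : 'M[F]_(a, T)) (U : 'M[F]_(b, T)) :
  (X == U)%MS = (X <= U)%MS && (\rank X == \rank U).
Proof.
case sXU: (X <= U)%MS => //=.
by have [_ ->] := mxrank_leqif_eq sXU; rewrite sXU.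
Qed.

Lemma count_pid (k m : nat) (U V : 'M[F]_T) :
  \rank U = (k + m)%N -> \rank V = k -> (V <= U)%MS ->
  \sum_(X : 'M[F]_(k + m, T)) (((X == U)%MS && ((pid_mx k : 'M_(k + m)) *m X == V)%MS)%R : nat)
  = (\prod_(i < k) (q ^ k - q ^ i) * \prod_(i < m) (q ^ (k + m) - q ^ (k + i)))%N.
Proof.
move=> rU rV sVU.
rewrite sum_col_mx.
have key (A : 'M[F]_(k, T)) (B : 'M[F]_(m, T)) :
  [&& (col_mx A B == U)%MS, ((pid_mx k : 'M_(k + m)) *m col_mx A B <= V)%MS%R
          & (V <= (pid_mx k : 'M_(k + m)) *m col_mx A B)%MS%R] =
  (A == V)%MS && ((B <= U)%MS && (\rank (A + B)%MS == \rank A + m)%N).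
  have e : ((pid_mx k : 'M_(k + m)) *m col_mx A B :=: A)%MS%R.
    rewrite pid_mx_block mul_block_col !mul1mx !mul0mx addr0 addr0.
    exact: eqmx_trans (eqmx_sym (addsmxE A (0 : 'M_(m, T)))) (addsmx0 _ A).
  rewrite !e eqmx_rankE col_mx_sub -addsmxE rU.
  case AV: (A <= V)%MS; case VA: (V <= A)%MS; rewrite /= ?andbF //.
  have rA : \rank A = k by rewrite -{2}rV; apply/eqmx_rank; rewrite AV VA.
  by rewrite (submx_trans AV sVU) rA /= andbT.
rewrite (eq_bigr (fun A : 'M[F]_(k, T) => (A == V)%MS * \prod_(i < m) (q ^ (k + m) - q ^ (k + i))))%N; last first.
  move=> A _; under eq_bigr do rewrite key.
  case AV: (A == V)%MS; last by rewrite mul0n big1.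
  have rA : \rank A = k by rewrite -{2}rV; apply/eqmx_rank.
  have sAU : (A <= U)%MS by case/andP: AV => AV _; apply: submx_trans AV sVU.
  rewrite mul1n (_ : \prod_(i < m) _ = \prod_(i < m) (q ^ \rank U - q ^ (\rank A + i))%N); last by rewrite rU rA.
  by rewrite -(count_ext m sAU).
rewrite -big_distrl /=; congr (_ * _)%N.
have := count_ext k (sub0mx 0 V); rewrite mxrank0 rV => <-.
apply: eq_bigr => A _; by rewrite adds0mx eqmx_rankE rV.
Qed.

Definition cc (h k : nat) : nat :=
  (\prod_(i < k) (q ^ k - q ^ i) * \prod_(i < h - k) (q ^ h - q ^ (k + i)))%N.

Lemma count_pid_h h k (U V : 'M[F]_T) : (k <= h)%N ->
  \rank U = h -> \rank V = k -> (V <= U)%MS ->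
  \sum_(X : 'M[F]_(h, T)) (((X == U)%MS && ((pid_mx k : 'M_h) *m X == V)%MS)%R : nat)
  = cc h k.
Proof.
move=> khk; move: (h - k) (subnKC khk) => m Eh; subst h.
move=> rU rV sVU; rewrite /cc addKn; exact: count_pid.
Qed.

Lemma count_G h (G : 'M[F]_h) (U V : 'M[F]_T) : \rank U = h ->
  \sum_(X : 'M[F]_(h, T)) (((X == U)%MS && (G *m X == V)%MS)%R : nat)
  = if (V <= U)%MS && (\rank G == \rank V) then cc h (\rank V) else 0%N.
Proof.
move=> rU.
set L := col_ebase G; set R := row_ebase G; set k := \rank G.
have Lu : L \in unitmx := col_ebase_unit G.
have Ru : R \in unitmx := row_ebase_unit G.
have eG X : (G *m X :=: (pid_mx k : 'M_h) *m (R *m X))%MS%R.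
  rewrite -{1}(mulmx_ebase G) -!mulmxA; apply: eqmxMfull.
  by rewrite row_full_unit.
under eq_bigr do rewrite !eG.
rewrite (reindex_inj (can_inj (mulKVmx Ru))) /=.
have eX X : (invmx R *m X :=: X)%MS%R.
  by apply: eqmxMfull; rewrite row_full_unit unitmx_inv.
under eq_bigr do rewrite mulKVmx // !eX.
have kh : (k <= h)%N by rewrite /k rank_leq_row.
case sVU: (V <= U)%MS => /=; last first.
  rewrite big1 // => X _; apply/eqP; rewrite eqb0; apply/negP.
  move=> /andP[/andP[XU _] /andP[_ VP]].
  by move: sVU; rewrite (submx_trans VP (submx_trans (submxMl _ _) XU)).
case: eqP => [e|nk]; first by rewrite -e; exact: (count_pid_h kh rU (esym e) sVU).
rewrite big1 // => X _; apply/eqP; rewrite eqb0; apply/negP.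
move=> /andP[XU PV]; apply: nk.
have fX : row_free X.
  by rewrite /row_free; case/andP: XU => XU UX; rewrite -{2}rU; apply/eqP/eqmx_rank/andP.
rewrite -(eqmx_rank PV) mxrankMfree // rank_pid_mx //.
Qed.

Lemma sum_bool_set (I : finType) (A : {set I}) :
  \sum_(i : I) ((i \in A) : nat) = #|A|.
Proof.
rewrite -sum1_card [RHS]big_mkcond /=; apply: eq_bigr => i _.
by case: (i \in A).
Qed.

Lemma q_gt1 : (1 < q)%N.
Proof. exact: card_finNzRing_gt1. Qed.

Lemma cc_split h k : (k <= h)%N ->
  cc h 0 = (\prod_(i < k) (q ^ h - q ^ i) * \prod_(i < h - k) (q ^ h - q ^ (k + i)))%N.
Proof.
move=> khk; rewrite /cc big_ord0 mul1n subn0.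
rewrite -(big_mkord xpredT (fun i => q ^ h - q ^ (0 + i)))%N.
rewrite (big_cat_nat (leq0n k) khk) /= big_mkord.
congr (_ * _)%N.
rewrite -{1}(add0n k) big_addn big_mkord; apply: eq_bigr => i _.
by rewrite add0n addnC.
Qed.

Lemma gauss_cc (R : realFieldType) h k : (k <= h)%N ->
  ((cc h k)%:R / (cc h 0)%:R = (gauss_binom R q h k)^-1 :> R)%R.
Proof.
move=> khk.
have q0 : (0 < q)%N by apply: ltnW q_gt1.
rewrite (cc_split khk) /cc !natrM invfM mulrACA divff ?mulr1; last first.
  rewrite pnatr_eq0 -lt0n prodn_gt0 // => i.
  by rewrite subn_gt0 ltn_exp2l ?q_gt1 // -ltn_subRL.
rewrite /gauss_binom -invf_div; congr (_^-1)%R.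
rewrite !natr_prod -prodf_div; apply: eq_bigr => i _.
have e (n : nat) : (i <= n)%N -> (q ^ n - q ^ i = q ^ i * (q ^ (n - i) - 1))%N.
  by move=> ?; rewrite mulnBr muln1 -expnD subnKC.
have ik : (i <= k)%N := ltnW (ltn_ord i).
rewrite (e h (leq_trans ik khk)) (e k ik).
rewrite !natrM !natrB ?expn_gt0 ?q0 // invfM mulrACA divff ?mul1r //.
by rewrite pnatr_eq0 -lt0n expn_gt0 q0.
Qed.

End Count.

Unset Implicit Arguments.
Local Open Scope ring_scope.

Theorem theorem3 (R : realFieldType) (F : finFieldType) (h T : nat)
  (hh : (1 <= h)%N) (hT : (h <= T)%N)
  (mu : 'M[F]_h -> R)
  (mu_ge0 : forall G, 0 <= mu G) (mu_sum1 : \sum_(G : 'M[F]_h) mu G = 1)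
  (U : 'M[F]_T) (rkU : \rank U = h)
  (V : 'M[F]_T) (rkV : (\rank V <= h)%N) :
  prob_span_eq mu U V =
    (if (V <= U)%MS
     then rank_def_dist mu (h - \rank V) / gauss_binom R #|F| h (\rank V)
     else 0).
Proof.
rewrite /prob_span_eq.
have cardB : #|bases_of h U| = cc F h 0.
  rewrite -(count_pid_h (V := 0) (leq0n h) rkU (mxrank0 _ _ _) (sub0mx _ _)).
  rewrite -sum_bool_set; apply: eq_bigr => X _.
  by rewrite inE pid_mx_0 mul0mx !sub0mx !andbT.
have inner (G : 'M[F]_h) : \sum_(X in bases_of h U)
    mu G * (#|bases_of h U|%:R)^-1 * ((G *m X == V)%MS)%:R =
  mu G * ((cc F h 0)%:R)^-1 *
    (if (V <= U)%MS && (\rank G == \rank V) then cc F h (\rank V) else 0%N)%:R.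
  rewrite -big_distrr /= -(count_G G V rkU) natr_sum big_mkcond cardB.
  congr (_ * _); apply: eq_bigr => X _; rewrite inE; by case: ifP.
under eq_bigr do rewrite inner.
case sVU: (V <= U)%MS => /=; last by rewrite big1 // => G _; rewrite mulr0.
rewrite /rank_def_dist big_distrl /= [RHS]big_mkcond /=.
apply: eq_bigr => G _.
rewrite eqn_sub2lE ?rank_leq_row //.
case: ifP => _; last by rewrite mulr0.
by rewrite -mulrA (mulrC _ (cc F h _)%:R) gauss_cc.
Qed.
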